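(* Let $p\in[1,\infty)$, $w$ a weight sequence, and let $A\subset L_{p,w}$ be bounded in $\|\cdot\|_{p,w}$. Then $A$ is equinormed with respect to $\{\|\cdot\|_{p,w,i}\}_{i\in\mathbb{N}}$ if and only if $$\forall\varepsilon>0\ \exists N\in\mathbb{N}\ \forall a\in A\ \forall i\ge N:\ \sum_{j=i+1}^\infty|a_j|^p\, w_{(\sigma^a)^{-1}_j}<\varepsilon.$$
   Context: A weight sequence is a sequence $w=(w_i)$ of positive reals with $w_1=1\ge w_2\ge\dots$, $w_i\to0$, and $\sum_i w_i=+\infty$. For a real sequence $a$, $\|a\|_{p,w}=\sup_{\sigma}\big(\sum_{i=1}^\infty |a_{\sigma_i}|^p w_i\big)^{1/p}$ over all permutations $\sigma$ of $\mathbb{N}$; $L_{p,w}$ is the set of real sequences with finite norm. $\|a\|_{p,w,i}=\|(a_1,\dots,a_i,0,0,\dots)\|_{p,w}$. $A$ is equinormed if $\forall\varepsilon>0\ \exists i\ \forall a\in A:\ \|a\|_{p,w}\le\|a\|_{p,w,i}+\varepsilon$. For $a\in L_{p,w}$, $\sigma^a:\mathbb{N}\to\mathbb{N}$ is defined recursively: $\sigma^a_i$ is the element $j$ of $\mathbb{N}\setminus\{\sigma^a_1,\dots,\sigma^a_{i-1}\}$ with $|a_j|$ maximal, taking the smallest such index in case of ties (well defined for $a\in L_{p,w}$, injective, with $|a_{\sigma^a_i}|$ nonincreasing). $(\sigma^a)^{-1}$ is its inverse on $\sigma^a(\mathbb{N})$, with the convention $w_{(\sigma^a)^{-1}_j}:=0$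 if $j\notin\sigma^a(\mathbb{N})$. *)

(* Defs.v *)
(* over an abstract R : realType.
   Sequences are indexed from 0 (paper index k corresponds to Rocq index k-1). *)
From HB Require Import structures.
From mathcomp Require Import all_boot all_order all_algebra.
From mathcomp Require Import all_classical all_reals all_analysis.
Set Implicit Arguments. Unset Strict Implicit. Unset Printing Implicit Defensive.
Import Order.TTheory GRing.Theory Num.Theory.
Local Open Scope classical_set_scope.
Local Open Scope ring_scope.

Section Defs.
Variable R : realType.

Definition weight_seq (w : nat -> R) : Prop :=
  [/\ w 0%N = 1, (forall i, 0 < w i), (forall i, w i.+1 <= w i),
      w @ \oo --> 0 & (\sum_(0 <= i <oo) (w i)%:E = +oo)%E].

Definition normpw (p : R) (w : nat -> R) (a : nat -> R) : \bar R :=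
  ereal_sup [set poweR (\sum_(0 <= i <oo) (powR `|a (s i)| p * w i)%:E) p^-1
            | s in [set s : nat -> nat | bijective s]].

Definition Lpw (p : R) (w : nat -> R) (a : nat -> R) : Prop :=
  (normpw p w a < +oo)%E.

Definition trunc (i : nat) (a : nat -> R) : nat -> R :=
  fun j => if (j < i)%N then a j else 0.

Definition normpwi (p : R) (w : nat -> R) (i : nat) (a : nat -> R) : \bar R :=
  normpw p w (trunc i a).

Definition equinormed (p : R) (w : nat -> R) (A : set (nat -> R)) : Prop :=
  forall eps : R, 0 < eps -> exists i : nat, forall a, A a ->
    (normpw p w a <= normpwi p w i a + eps%:E)%E.

Definition sigma_next (a : nat -> R) (l : seq nat) : nat :=
  xget 0%N [set j | j \notin l /\ (forall k, k \notin l -> `|a k| <= `|a j|)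
                    /\ (forall k, k \notin l -> `|a k| = `|a j| -> (j <= k)%N)].

Fixpoint sigma_list (a : nat -> R) (n : nat) : seq nat :=
  match n with
  | 0%N => [::]
  | n'.+1 => rcons (sigma_list a n') (sigma_next a (sigma_list a n'))
  end.

Definition sigma (a : nat -> R) (i : nat) : nat := sigma_next a (sigma_list a i).

(* w_{(sigma^a)^{-1}_j}, with the convention 0 if j is not in the range *)
Definition winv (w : nat -> R) (a : nat -> R) (j : nat) : R :=
  if pselect (exists i, sigma a i = j) is left _
  then w (xget 0%N [set i | sigma a i = j]) else 0.

End Defs.

(* Main.v *)
Require Import Defs.
From HB Require Import structures.
From mathcomp Require Import all_boot all_order all_algebra.
From mathcomp Require Import all_classical all_reals all_analysis.
From mathcomp Require Import ring lra zify.
Import Order.TTheory GRing.Theory Num.Theory.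
Local Open Scope classical_set_scope.
Local Open Scope ring_scope.

Lemma mem_le_sumn (l : seq nat) x : x \in l -> (x <= sumn l)%N.
Proof.
elim: l => //= y l IH; rewrite in_cons => /orP[/eqP->|/IH]; first exact: leq_addr.
by move=> h; apply: (leq_trans h); exact: leq_addl.
Qed.

Lemma ext_bij (l : seq nat) : uniq l ->
  exists s : nat -> nat, bijective s /\ forall k, (k < size l)%N -> s k = nth 0%N l k.
Proof.
move=> ul; set m := (sumn l + size l)%N.
have lm : forall x, x \in l -> (x < m)%N.
  move=> x xl; rewrite /m; have := @mem_le_sumn _ _ xl.
  have : (0 < size l)%N by move: xl; case: (l).
  by lia.
set L := l ++ [seq x <- iota 0 m | x \notin l].
have uL : uniq L.
  rewrite cat_uniq ul filter_uniq ?iota_uniq // andbT /=.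
  by apply/hasPn => x; rewrite mem_filter => /andP[].
have memL : L =i iota 0 m.
  move=> x; rewrite mem_cat mem_filter mem_iota add0n /=.
  case xl: (x \in l) => /=; last by [].
  by rewrite (lm x xl).
have sL : size L = m by rewrite (perm_size (uniq_perm uL (iota_uniq 0 m) memL)) size_iota.
exists (fun k => if (k < m)%N then nth 0%N L k else k); split.
  apply: (@Bijective _ _ _ (fun x => if (x < m)%N then index x L else x)).
    move=> k /=; case: (ltnP k m) => km.
      have hk : nth 0%N L k \in L by apply: mem_nth; rewrite sL.
      by rewrite memL mem_iota add0n /= in hk; rewrite hk index_uniq // sL.
    by rewrite ltnNge km.
  move=> x /=; case: (ltnP x m) => xm.
    have hx : x \in L by rewrite memL mem_iota.
    by rewrite -sL index_mem hx nth_index.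
  by rewrite ltnNge xm.
move=> k kl; have km : (k < m)%N by rewrite /m; lia.
by rewrite km nth_cat kl.
Qed.

Lemma mem_map_iotaS (t : nat -> nat) l x :
  (x \in map t (iota 0 l.+1)) = (x \in map t (iota 0 l)) || (x == t l).
Proof. by rewrite -addn1 iotaD map_cat mem_cat /= in_cons orbF add0n. Qed.

Section Rearr.
Variable R : realType.

Definition greedy (g : nat -> R) (t : nat -> nat) :=
  (forall l, t l \notin map t (iota 0 l)) /\
  (forall l x, x \notin map t (iota 0 l) -> g x <= g (t l)).

Lemma top_sum g t : greedy g t -> forall m l0 (S : seq nat), uniq S -> size S = m ->
  (forall x, x \in S -> x \notin map t (iota 0 l0)) ->
  \sum_(x <- S) g x <= \sum_(l0 <= k < l0 + m) g (t k).
Proof.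
move=> [Ht Hg]; elim=> [|m IH] l0 S uS sS HS.
  by move/size0nil: sS => ->; rewrite big_nil addn0 big_geq.
rewrite big_ltn; last by lia.
rewrite -addSnnS.
have HS' : forall x, x \in S -> x != t l0 -> x \notin map t (iota 0 l0.+1).
  by move=> x xS xt; rewrite mem_map_iotaS negb_or xt andbT HS.
case: (boolP (t l0 \in S)) => h.
  rewrite (big_rem _ h) /=; apply: lerD => //.
  apply: IH.
  - exact: rem_uniq.
  - by rewrite size_rem // sS.
  move=> x xr; apply: HS'; first exact: (mem_rem xr).
  by apply/eqP => xt; move: xr; rewrite xt mem_rem_uniqF.
case: S uS sS HS HS' h => [//|x S] /= /andP[xS uS] [sS] HS HS' h.
rewrite big_cons; apply: lerD.
  by apply: Hg; apply: HS; rewrite in_cons eqxx.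
apply: IH => // y yS; apply: HS'; first by rewrite in_cons yS orbT.
by apply/eqP => yt; move: h; rewrite -yt in_cons yS orbT.
Qed.

Lemma abel (x v : nat -> R) n :
  \sum_(k < n) x k * v k = \sum_(k < n) (v k - v k.+1) * (\sum_(i < k.+1) x i)
     + v n * \sum_(i < n) x i.
Proof.
elim: n => [|n IH]; first by rewrite !big_ord0 mulr0 addr0.
rewrite big_ord_recr /= IH big_ord_recr /= (big_ord_recr n) /=.
set P := \sum_(i < n) x i; lra.
Qed.

Lemma rearr g t (v : nat -> R) : greedy g t -> (forall k, 0 <= v k) ->
  (forall k, v k.+1 <= v k) -> forall l, uniq l ->
  \sum_(k < size l) g (nth 0%N l k) * v k <= \sum_(k < size l) g (t k) * v k.
Proof.
move=> gr v0 vd l ul.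
have P : forall r, (r <= size l)%N ->
    \sum_(i < r) g (nth 0%N l i) <= \sum_(i < r) g (t i).
  move=> r rl.
  have -> : \sum_(i < r) g (nth 0%N l i) = \sum_(x <- take r l) g x.
    rewrite -(map_nth_iota0 0%N rl) big_map.
    have -> : iota 0 r = index_iota 0 r by rewrite /index_iota subn0.
    by rewrite big_mkord.
  have := @top_sum g t gr r 0 (take r l) (take_uniq r ul).
  rewrite size_take_min (minn_idPl rl) => /(_ erefl) H.
  rewrite add0n big_mkord in H; by apply: H.
rewrite (abel (fun k => g (nth 0%N l k))) (abel (fun k => g (t k))) lerD //.
  apply: ler_sum => k _; apply: ler_wpM2l; first by rewrite subr_ge0.
  by apply: P.
by apply: ler_wpM2l => //; exact: P.
Qed.

End Rearr.
Arguments greedy {R}.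
Arguments top_sum {R}.
Arguments rearr {R}.

Set Implicit Arguments. Unset Strict Implicit.

Definition fp {R : realType} (p : R) (a : nat -> R) j := powR `|a j| p.

Section S3.
Variable R : realType.
Variables (p : R) (w : nat -> R).
Hypothesis hp : 1 <= p.
Hypothesis hw : weight_seq w.

Lemma p_gt0 : 0 < p. Proof. exact: lt_le_trans ltr01 hp. Qed.
Lemma pinv_ge0 : 0 <= p^-1. Proof. by rewrite invr_ge0 ltW // p_gt0. Qed.

Lemma fp_ge0 a j : 0 <= fp p a j. Proof. exact: powR_ge0. Qed.

Lemma w_gt0 k : 0 < w k. Proof. by case: hw. Qed.
Lemma w_ge0 k : 0 <= w k. Proof. exact/ltW/w_gt0. Qed.
Lemma w_dec k : w k.+1 <= w k. Proof. by case: hw. Qed.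
Lemma w_mono m n : (m <= n)%N -> w n <= w m.
Proof.
move=> /subnK <-; elim: (n - m)%N => [|k IH]; first by rewrite add0n.
by rewrite addSn; apply: le_trans (w_dec _) IH.
Qed.
Lemma w_le1 k : w k <= 1.
Proof. by case: hw => w0 _ _ _ _; rewrite -w0; apply: w_mono. Qed.

Lemma series_ge (u : nat -> R) n : (forall k, 0 <= u k) ->
  ((\sum_(k < n) u k)%:E <= \sum_(0 <= i <oo) (u i)%:E)%E.
Proof.
move=> u0; rewrite -sumEFin -(big_mkord xpredT (fun k => (u k)%:E)).
by apply: nneseries_lim_ge => k _ _; rewrite lee_fin.
Qed.

Lemma series_le (u : nat -> R) B : (forall k, 0 <= u k) ->
  (forall n, \sum_(k < n) u k <= B) -> (\sum_(0 <= i <oo) (u i)%:E <= B%:E)%E.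
Proof.
move=> u0 uB; apply: lime_le.
  by apply: is_cvg_nneseries => k _ _; rewrite lee_fin.
apply: nearW => n; rewrite /= big_mkord sumEFin lee_fin; exact: uB.
Qed.

Lemma W_unbounded (B : R) : exists n, B < \sum_(k < n) w k.
Proof.
case: (pselect (exists n, B < \sum_(k < n) w k)) => // H; exfalso.
case: hw => _ _ _ _ hs.
have : (\sum_(0 <= i <oo) (w i)%:E <= B%:E)%E.
  apply: series_le => [k|n]; first exact: w_ge0.
  by rewrite leNgt; apply/negP => h; apply: H; exists n.
by rewrite hs leye_eq.
Qed.

Lemma powRpinv x : 0 <= x -> powR (powR x p^-1) p = x.
Proof. by move=> x0; rewrite -powRrM mulVf ?gt_eqF ?p_gt0 // powRr1. Qed.

Lemma powRinvp x : 0 <= x -> powR (powR x p) p^-1 = x.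
Proof. by move=> x0; rewrite -powRrM mulfV ?gt_eqF ?p_gt0 // powRr1. Qed.

Lemma lep x y : 0 <= x -> x <= y -> powR x p <= powR y p.
Proof.
move=> x0 xy; apply: (ge0_ler_powR (ltW p_gt0)) => //.
all: by rewrite ?nnegrE // (le_trans x0 xy).
Qed.

Lemma lepinv x y : 0 <= x -> x <= y -> powR x p^-1 <= powR y p^-1.
Proof.
move=> x0 xy; apply: (ge0_ler_powR pinv_ge0) => //.
all: by rewrite ?nnegrE // (le_trans x0 xy).
Qed.

Lemma lepinv_inv x y : 0 <= x -> 0 <= y -> powR x p^-1 <= powR y p^-1 -> x <= y.
Proof.
move=> x0 y0 h; rewrite -(@powRpinv x x0) -(@powRpinv y y0); apply: lep => //.
exact: powR_ge0.
Qed.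

Lemma lep_inv x y : 0 <= x -> 0 <= y -> powR x p <= powR y p -> x <= y.
Proof.
move=> x0 y0 h; rewrite -(@powRinvp x x0) -(@powRinvp y y0); apply: lepinv => //.
exact: powR_ge0.
Qed.

Lemma normpw_ge b (l : seq nat) : uniq l ->
  ((powR (\sum_(k < size l) fp p b (nth 0%N l k) * w k) p^-1)%:E <= normpw p w b)%E.
Proof.
move=> ul; have [s [bs hs]] := ext_bij l ul.
apply: le_trans (ereal_sup_ubound _); last by exists s.
rewrite -poweR_EFin; apply: gt0_ler_poweR; first exact: pinv_ge0.
- by rewrite in_itv /= leey andbT lee_fin sumr_ge0 // => k _; rewrite mulr_ge0 ?fp_ge0 ?w_ge0.
- rewrite in_itv /= leey andbT.
  by apply: nneseries_ge0 => k _ _; rewrite lee_fin mulr_ge0 ?powR_ge0 ?w_ge0.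
have -> : \sum_(k < size l) fp p b (nth 0%N l k) * w k = \sum_(k < size l) powR `|b (s k)| p * w k.
  by apply: eq_bigr => k _; rewrite hs.
by apply: series_ge => k; rewrite mulr_ge0 ?powR_ge0 ?w_ge0.
Qed.

Lemma normpw_le b (U : R) : 0 <= U ->
  (forall s : nat -> nat, bijective s -> forall n, \sum_(k < n) fp p b (s k) * w k <= U) ->
  (normpw p w b <= (powR U p^-1)%:E)%E.
Proof.
move=> U0 H; apply/ereal_supP => _ [s bs <-].
rewrite -poweR_EFin; apply: gt0_ler_poweR; first exact: pinv_ge0.
- rewrite in_itv /= leey andbT.
  by apply: nneseries_ge0 => k _ _; rewrite lee_fin mulr_ge0 ?powR_ge0 ?w_ge0.
- by rewrite in_itv /= leey andbT lee_fin.
by apply: series_le => [k|n]; [rewrite mulr_ge0 ?powR_ge0 ?w_ge0 | exact: H].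
Qed.

End S3.

Section S4.
Variable R : realType.

Definition tozero (a : nat -> R) := forall c, 0 < c -> exists K, forall j, (K <= j)%N -> `|a j| < c.

Lemma sigma_listE (a : nat -> R) l : sigma_list a l = map (sigma a) (iota 0 l).
Proof.
elim: l => [//|n IH].
change (sigma_list a n.+1) with (rcons (sigma_list a n) (sigma a n)).
have -> : iota 0 n.+1 = rcons (iota 0 n) n by rewrite -cats1 -addn1 iotaD.
by rewrite IH map_rcons.
Qed.

Lemma next_ex (a : nat -> R) (H : tozero a) (l : seq nat) :
  exists j, j \notin l /\ (forall k, k \notin l -> `|a k| <= `|a j|).
Proof.
have j0l : (sumn l).+1 \notin l.
  by apply/negP => /mem_le_sumn; rewrite ltnn.
case: (pselect (exists j1, j1 \notin l /\ 0 < `|a j1|)); last first.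
  move=> N; exists (sumn l).+1; split => // k kl.
  rewrite (le_trans _ (normr_ge0 _)) // leNgt; apply/negP => h.
  by apply: N; exists k.
move=> [j1 [j1l a1]]; have [K HK] := H _ a1.
have : forall n, exists j, [/\ j \notin l, `|a j1| <= `|a j| &
    forall k, (k < n)%N -> k \notin l -> `|a k| <= `|a j|].
  elim=> [|n [j [jl j1j Hj]]]; first by exists j1; split.
  case: (boolP (n \in l)) => nl.
    exists j; split => // k kn kl; case: (ltnP k n) => kn'; first exact: Hj.
    have kE : k = n by lia.
    by rewrite kE nl in kl.
  case: (leP `|a n| `|a j|) => anj.
    exists j; split => // k kn kl; case: (ltnP k n) => kn'; first exact: Hj.
    have -> : k = n by lia.
    exact: anj.
  exists n; split => //; first exact: le_trans j1j (ltW anj).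
  move=> k kn kl; case: (ltnP k n) => kn'; first exact: le_trans (Hj _ kn' kl) (ltW anj).
  have -> : k = n by lia.
  by [].
move=> /(_ K) [j [jl j1j Hj]]; exists j; split => // k kl.
case: (ltnP k K) => kK; first exact: Hj.
exact: le_trans (ltW (HK _ kK)) j1j.
Qed.

Lemma next_spec (a : nat -> R) (H : tozero a) (l : seq nat) :
  sigma_next a l \notin l /\ (forall k, k \notin l -> `|a k| <= `|a (sigma_next a l)|).
Proof.
pose Q j := j \notin l /\ (forall k, k \notin l -> `|a k| <= `|a j|).
have exQ : exists j, `[< Q j >] by have [j hj] := next_ex H l; exists j; apply/asboolP.
case: (ex_minnP exQ) => m /asboolP [ml Hm] minm.
suff : [set j | j \notin l /\ (forall k, k \notin l -> `|a k| <= `|a j|)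
                    /\ (forall k, k \notin l -> `|a k| = `|a j| -> (j <= k)%N)]
          (sigma_next a l) by case=> ? [].
apply: xgetPex; exists m; split => //; split => // k kl akm.
apply: minm; apply/asboolP; split => // k' k'l; rewrite akm; exact: Hm.
Qed.

Lemma sig_notin (a : nat -> R) (H : tozero a) l : sigma a l \notin map (sigma a) (iota 0 l).
Proof. by rewrite -sigma_listE; case: (next_spec H (sigma_list a l)). Qed.

Lemma sig_max (a : nat -> R) (H : tozero a) l x : x \notin map (sigma a) (iota 0 l) ->
  `|a x| <= `|a (sigma a l)|.
Proof. by rewrite -sigma_listE; case: (next_spec H (sigma_list a l)) => _; apply. Qed.

Lemma sig_inj (a : nat -> R) (H : tozero a) : injective (sigma a).
Proof.
suff K : forall h k, (h < k)%N -> sigma a h != sigma a k.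
  move=> h k e; case: (ltngtP h k) => // hk.
    by move: (K _ _ hk); rewrite e eqxx.
  by move: (K _ _ hk); rewrite e eqxx.
move=> h k hk; apply/eqP => e; move: (sig_notin H k); rewrite -e.
by rewrite map_f // mem_iota.
Qed.

End S4.

Lemma nth_map_iota (t : nat -> nat) n k : (k < n)%N -> nth 0%N (map t (iota 0 n)) k = t k.
Proof. by move=> kn; rewrite (nth_map 0%N) ?size_iota // nth_iota // add0n. Qed.

Lemma size_map_iota (t : nat -> nat) n : size (map t (iota 0 n)) = n.
Proof. by rewrite size_map size_iota. Qed.

Section S5.
Variable R : realType.
Variables (p : R) (w : nat -> R).
Hypothesis hp : 1 <= p.
Hypothesis hw : weight_seq w.

Lemma sum_nonneg_widen (u : nat -> R) m n : (forall k, 0 <= u k) -> (m <= n)%N ->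
  \sum_(k < m) u k <= \sum_(k < n) u k.
Proof.
move=> u0 mn; rewrite (big_ord_widen n u mn) [leRHS](bigID (fun k : 'I_n => (k < m)%N)) /=.
by rewrite lerDl sumr_ge0.
Qed.

Lemma sum_zero_tail (u : nat -> R) L n : (forall k, (L <= k)%N -> u k = 0) ->
  (forall k, 0 <= u k) -> \sum_(k < n) u k <= \sum_(k < L) u k.
Proof.
move=> uz u0; case: (leqP n L) => nL; first exact: sum_nonneg_widen.
rewrite (big_ord_widen n u (ltnW nL)) [leLHS](bigID (fun k : 'I_n => (k < L)%N)) /=.
by rewrite [X in _ + X <= _]big1 ?addr0 // => k; rewrite -leqNgt => /uz.
Qed.

Lemma greedy_sig (a : nat -> R) (H : tozero a) : greedy (fp p a) (sigma a).
Proof.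
split; first exact: sig_notin.
move=> l x hx; apply: lep => //; exact: sig_max.
Qed.

Lemma le_pow_of S (M : R) : 0 <= S -> ((powR S p^-1)%:E <= M%:E)%E -> S <= powR M p.
Proof.
move=> S0; rewrite lee_fin => h.
have M0 : 0 <= M by apply: le_trans h; exact: powR_ge0.
apply: (lepinv_inv hp) => //; first exact: powR_ge0.
by rewrite powRinvp.
Qed.

Lemma tozero_bdd (a : nat -> R) M : (normpw p w a <= M%:E)%E -> tozero a.
Proof.
move=> hM c c0.
case: (pselect (exists K, forall j, (K <= j)%N -> `|a j| < c)) => // N; exfalso.
have HN : forall K, exists j, (K <= j)%N /\ c <= `|a j|.
  move=> K; case: (pselect (exists j, (K <= j)%N /\ c <= `|a j|)) => // N2.
  exfalso; apply: N; exists K => j Kj; rewrite ltNge; apply/negP => h.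
  by apply: N2; exists j.
have lists : forall n, exists l : seq nat, [/\ uniq l, size l = n & forall x, x \in l -> c <= `|a x|].
  elim=> [|n [l [ul sl hl]]]; first by exists [::].
  have [j [jK cj]] := HN (sumn l).+1.
  exists (j :: l); split.
  - rewrite /= ul andbT; apply/negP => /mem_le_sumn; lia.
  - by rewrite /= sl.
  - by move=> x; rewrite in_cons => /orP[/eqP->|/hl].
have cp0 : 0 < powR c p by apply: powR_gt0.
have [n hn] := W_unbounded hw (powR M p / powR c p).
have [l [ul sl hl]] := lists n.
have := normpw_ge hp hw a ul; rewrite sl => /(le_trans)/(_ hM) /le_pow_of.
have S0 : 0 <= \sum_(k < n) fp p a (nth 0%N l k) * w k.
  by apply: sumr_ge0 => k _; rewrite mulr_ge0 ?fp_ge0 ?w_ge0.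
move=> /(_ S0) h.
have : powR c p * \sum_(k < n) w k <= powR M p.
  apply: le_trans h; rewrite mulr_sumr; apply: ler_sum => k _.
  apply: ler_wpM2r; first exact: w_ge0.
  apply: lep => //; first exact: ltW.
  by apply: hl; rewrite mem_nth // sl.
by rewrite -ler_pdivlMl // mulrC leNgt hn.
Qed.


Lemma uniq_sig (a : nat -> R) (H : tozero a) n : uniq (map (sigma a) (iota 0 n)).
Proof. by rewrite map_inj_uniq ?iota_uniq //; exact: sig_inj. Qed.

Lemma sorted_bdd (a : nat -> R) M (hM : (normpw p w a <= M%:E)%E) (H : tozero a) (t : nat -> nat)
  n : uniq (map t (iota 0 n)) -> \sum_(k < n) fp p a (t k) * w k <= powR M p.
Proof.
move=> ul; have := normpw_ge hp hw a ul; rewrite size_map_iota.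
have -> : \sum_(k < n) fp p a (nth 0%N (map t (iota 0 n)) k) * w k =
          \sum_(k < n) fp p a (t k) * w k.
  by apply: eq_bigr => k _; rewrite nth_map_iota.
move=> /le_trans/(_ hM); apply: le_pow_of.
by apply: sumr_ge0 => k _; rewrite mulr_ge0 ?fp_ge0 ?(w_ge0 hw).
Qed.

Lemma rearr_list (a : nat -> R) (H : tozero a) (t : nat -> nat) n :
  uniq (map t (iota 0 n)) ->
  \sum_(k < n) fp p a (t k) * w k <= \sum_(k < n) fp p a (sigma a k) * w k.
Proof.
move=> ul; have := rearr (fp p a) (sigma a) w (greedy_sig H) (w_ge0 hw) (w_dec hw) _ ul; rewrite size_map_iota.
have -> // : \sum_(k < n) fp p a (nth 0%N (map t (iota 0 n)) k) * w k =
          \sum_(k < n) fp p a (t k) * w k.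
by apply: eq_bigr => k _; rewrite nth_map_iota.
Qed.

Lemma rearr_bij (a : nat -> R) (H : tozero a) (s : nat -> nat) : bijective s -> forall n,
  \sum_(k < n) fp p a (s k) * w k <= \sum_(k < n) fp p a (sigma a k) * w k.
Proof.
move=> bs n; apply: rearr_list => //.
by rewrite map_inj_uniq ?iota_uniq //; exact: bij_inj.
Qed.

Lemma winvE (a : nat -> R) (H : tozero a) j n : (forall h, sigma a h = j -> (h < n)%N) ->
  winv w a j = \sum_(h < n) (if sigma a h == j then w h else 0).
Proof.
move=> Hn; rewrite /winv; case: pselect => [ex|nex].
  have e : sigma a (xget 0%N [set i | sigma a i = j]) = j := xgetPex 0%N ex.
  have h0n := Hn _ e.
  rewrite (bigD1 (Ordinal h0n)) //= e eqxx big1 ?addr0 // => i ih.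
  case: ifP => // /eqP e'; exfalso; move: ih; rewrite -e in e'.
  by move/(sig_inj H): e' => e'; apply/negP; rewrite negbK; apply/eqP/val_inj.
rewrite big1 // => i _; case: ifP => // /eqP e; exfalso; apply: nex; by exists i.
Qed.

Lemma cover (a : nat -> R) (H : tozero a) J : exists n, forall h, (sigma a h < J)%N -> (h < n)%N.
Proof.
elim: J => [|J [n Hn]]; first by exists 0%N.
case: (pselect (exists h, sigma a h = J)) => [[h0 e]|ne].
  exists (maxn n h0.+1) => h; rewrite ltnS leq_eqVlt => /orP[/eqP e'|/Hn hn].
    by rewrite -e in e'; move/(sig_inj H): e' => ->; rewrite leq_max ltnSn orbT.
  by rewrite leq_max hn.
exists n => h; rewrite ltnS leq_eqVlt => /orP[/eqP e'|/Hn //].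
by exfalso; apply: ne; exists h.
Qed.

Lemma sum_if_eq (x J : nat) (G : nat -> R) :
  \sum_(j < J) (if x == j then G j else 0) = if (x < J)%N then G x else 0.
Proof.
elim: J => [|J IH]; first by rewrite big_ord0.
rewrite big_ord_recr /= IH; case: (ltngtP x J) => [h|h|->].
- by rewrite ltnS (ltnW h) addr0.
- by rewrite ltnS leqNgt h addr0.
- by rewrite ltnSn add0r.
Qed.

Lemma sum_winv (a : nat -> R) (H : tozero a) (F : nat -> R) J n :
  (forall h, (sigma a h < J)%N -> (h < n)%N) ->
  \sum_(j < J) F j * winv w a j = \sum_(h < n | (sigma a h < J)%N) F (sigma a h) * w h.
Proof.
move=> Hn.
have -> : \sum_(j < J) F j * winv w a j =
    \sum_(j < J) \sum_(h < n) (if sigma a h == j then F j * w h else 0).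
  apply: eq_bigr => j _; rewrite (@winvE a H j n); last first.
    by move=> h e; apply: Hn; rewrite e.
  by rewrite mulr_sumr; apply: eq_bigr => h _; case: ifP; rewrite ?mulr0.
rewrite exchange_big [RHS]big_mkcond /=; apply: eq_bigr => h _.
have -> : \sum_(j < J) (if sigma a h == j then F j * w h else 0) =
          \sum_(j < J) (if sigma a h == j then F (sigma a h) * w h else 0).
  by apply: eq_bigr => j _; case: eqP => // ->.
by rewrite (sum_if_eq (sigma a h) J (fun _ => F (sigma a h) * w h)).
Qed.

Lemma sum_nat_from (G : nat -> R) i J :
  \sum_(i <= j < J) G j = \sum_(j < J) (if (i <= j)%N then G j else 0).
Proof.
elim: J => [|J IH]; first by rewrite big_ord0 big_geq.
rewrite big_ord_recr /= -IH; case: (leqP i J) => iJ.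
  by rewrite big_nat_recr.
by rewrite big_geq // big_geq ?(ltnW iJ) // addr0.
Qed.

Lemma fp_trunc i (a : nat -> R) x : fp p (trunc i a) x = if (x < i)%N then fp p a x else 0.
Proof.
rewrite /fp /trunc; case: ifP => // _.
by rewrite normr0 powR0 // gt_eqF // (p_gt0 hp).
Qed.

End S5.

Section S6.
Variable R : realType.
Variables (p : R) (w : nat -> R).
Hypothesis hp : 1 <= p.
Hypothesis hw : weight_seq w.

Lemma superadd (x y : R) : 0 <= x -> 0 <= y -> powR x p + powR y p <= powR (x + y) p.
Proof.
move=> x0 y0; have p0 := p_gt0 hp.
have q0 : 0 <= p - 1 by rewrite subr_ge0.
have mono : forall u v, 0 <= u -> u <= v -> powR u (p - 1) <= powR v (p - 1).
  move=> u v u0 uv; apply: (ge0_ler_powR q0) => //; rewrite nnegrE //.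
  exact: le_trans uv.
rewrite -(mulr_powRB1 x0 p0) -(mulr_powRB1 y0 p0) -(mulr_powRB1 (addr_ge0 x0 y0) p0).
rewrite mulrDl; apply: lerD; apply: ler_wpM2l => //; apply: mono => //.
- by rewrite lerDl.
- by rewrite lerDr.
Qed.

Lemma sub_pinv (S T : R) : 0 <= S -> 0 <= T ->
  powR (S + T) p^-1 <= powR S p^-1 + powR T p^-1.
Proof.
move=> S0 T0.
have x0 : 0 <= powR S p^-1 := powR_ge0 _ _.
have y0 : 0 <= powR T p^-1 := powR_ge0 _ _.
rewrite -[leRHS](@powRinvp _ _ hp); last exact: addr_ge0.
apply: (lepinv hp); first exact: addr_ge0.
by have := superadd x0 y0; rewrite !(powRpinv hp).
Qed.

Lemma conv_lip (y d Mx : R) : 0 <= y -> y <= Mx -> 0 <= d -> d <= 1 ->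
  powR (y + d) p <= powR y p + d * powR (Mx + 1) p.
Proof.
move=> y0 yM d0 d1.
set Y := Mx + 1.
have Yy : 1 <= Y - y by rewrite /Y; lra.
have Yy0 : 0 < Y - y by lra.
set t := d / (Y - y).
have t0 : 0 <= t by rewrite /t divr_ge0 // ltW.
have td : t <= d by rewrite /t ler_pdivrMr // ler_peMr.
have t1 : t <= 1 by lra.
have e : y + d = t * Y + (1 - t) * y.
  by rewrite /t; field; rewrite gt_eqF.
have Y0 : 0 <= Y by lra.
have := convex_powR hp (Itv01 t0 t1) (x := Y) (y := y).
rewrite !inE /= !in_itv /= !andbT => /(_ Y0 y0).
rewrite !convRE /= => h.
rewrite e; apply: le_trans h _.
have hY : 0 <= powR Y p := powR_ge0 _ _.
have hy : 0 <= powR y p := powR_ge0 _ _.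
have h1 : t * powR Y p <= d * powR Y p by apply: ler_wpM2r.
have h2 : 0 <= t * powR y p by apply: mulr_ge0.
have -> : unstable.onem t = 1 - t by [].
lra.
Qed.


Lemma tozero_trunc i (a : nat -> R) : tozero (trunc i a).
Proof.
move=> c c0; exists i => j ij; rewrite /trunc.
by rewrite ltnNge ij normr0.
Qed.

Lemma d_dec (b : nat -> R) (H : tozero b) k : fp p b (sigma b k.+1) <= fp p b (sigma b k).
Proof.
have [_ g] := greedy_sig hp H; apply: g.
by have := sig_notin H k.+1; rewrite mem_map_iotaS negb_or => /andP[].
Qed.

Lemma d_mono (b : nat -> R) (H : tozero b) m n : (m <= n)%N ->
  fp p b (sigma b n) <= fp p b (sigma b m).
Proof.
move=> /subnK <-; elim: (n - m)%N => [|k IH]; first by rewrite add0n.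
by rewrite addSn; apply: le_trans (d_dec H _) IH.
Qed.

Lemma trunc_block (a : nat -> R) (i : nat) : exists L, [/\ (L <= i)%N,
  (forall k, (k < L)%N -> (sigma (trunc i a) k < i)%N),
  (forall k, (L <= k)%N -> fp p (trunc i a) (sigma (trunc i a) k) = 0) &
  (normpw p w (trunc i a) <=
     (powR (\sum_(k < L) fp p (trunc i a) (sigma (trunc i a) k) * w k) p^-1)%:E)%E].
Proof.
set b := trunc i a; set t := sigma b.
have H : tozero b := tozero_trunc i a.
have exP : exists k, (i <= t k)%N.
  case: (pselect (exists k, (i <= t k)%N)) => // N; exfalso.
  have sub : {subset map t (iota 0 i.+1) <= iota 0 i}.
    move=> x /mapP [k _ ->]; rewrite mem_iota add0n /= ltnNge; apply/negP => h.
    by apply: N; exists k.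
  have := uniq_leq_size (uniq_sig H i.+1) sub.
  by rewrite size_map !size_iota ltnn.
have exPi : exists k, (k <= i)%N && (i <= t k)%N.
  case: (pselect (exists k, (k <= i)%N && (i <= t k)%N)) => // N; exfalso.
  have sub : {subset map t (iota 0 i.+1) <= iota 0 i}.
    move=> x /mapP [k]; rewrite mem_iota add0n /= ltnS => ki ->.
    rewrite mem_iota add0n /= ltnNge; apply/negP => h.
    by apply: N; exists k; rewrite ki h.
  have := uniq_leq_size (uniq_sig H i.+1) sub.
  by rewrite size_map !size_iota ltnn.
case: (ex_minnP exP) => L tL minL.
have [k0 /andP [k0i tk0]] := exPi.
have Li : (L <= i)%N := leq_trans (minL _ tk0) k0i.
have dL : forall k, (L <= k)%N -> fp p b (t k) = 0.
  move=> k Lk; apply/eqP; rewrite eq_le fp_ge0 andbT.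
  apply: le_trans (d_mono H Lk) _.
  by rewrite /t /b (fp_trunc hp) ltnNge tL.
exists L; split => //.
  by move=> k kL; rewrite ltnNge; apply/negP => /minL; rewrite leqNgt kL.
apply: (normpw_le hp hw); first by apply: sumr_ge0 => k _; rewrite mulr_ge0 ?fp_ge0 ?(w_ge0 hw).
move=> s bs n; apply: le_trans (rearr_bij hp hw H bs n) _.
apply: (sum_zero_tail (u := fun k => fp p b (t k) * w k)).
  by move=> k /dL ->; rewrite mul0r.
by move=> k; rewrite mulr_ge0 ?fp_ge0 ?(w_ge0 hw).
Qed.

End S6.

Lemma sum_split_nat {R : realType} (F : nat -> R) m n :
  \sum_(k < m + n) F k = \sum_(k < m) F k + \sum_(k < n) F (m + k)%N.
Proof. by rewrite big_split_ord. Qed.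

Lemma sum_split_le {R : realType} (F : nat -> R) r L : (r <= L)%N ->
  \sum_(k < L) F k = \sum_(k < r) F k + \sum_(k < L - r) F (r + k)%N.
Proof. by move=> rL; move: (L - r)%N (subnKC rL) => m <-; exact: sum_split_nat. Qed.

Section S7.
Variable R : realType.
Variables (p : R) (w : nat -> R).
Hypothesis hp : 1 <= p.
Hypothesis hw : weight_seq w.
Variables (A : set (nat -> R)) (M : R).
Hypothesis hM0 : 0 <= M.
Hypothesis hbdd : forall a, A a -> (normpw p w a <= M%:E)%E.

Let Kc := powR (M + 1) p.

Lemma Kc_gt0 : 0 < Kc.
Proof. by apply: powR_gt0; apply: (le_lt_trans hM0); rewrite ltrDl. Qed.

Lemma fp_trunc_le i (a : nat -> R) x : fp p (trunc i a) x <= fp p a x.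
Proof. by rewrite (fp_trunc hp); case: ifP => // _; exact: fp_ge0. Qed.

Lemma gap (a : nat -> R) (Aa : A a) i d (d0 : 0 <= d) (d1 : d <= 1)
  (hi : (normpw p w a <= normpw p w (trunc i a) + d%:E)%E) :
  exists L, [/\ (L <= i)%N,
    (forall k, (k < L)%N -> (sigma (trunc i a) k < i)%N),
    (forall k, (L <= k)%N -> fp p (trunc i a) (sigma (trunc i a) k) = 0) &
    (forall l, uniq l -> \sum_(k < size l) fp p a (nth 0%N l k) * w k <=
       \sum_(k < L) fp p (trunc i a) (sigma (trunc i a) k) * w k + d * Kc)].
Proof.
have [L [Li hL dL hn]] := trunc_block hp hw a i.
exists L; split => // l ul.
set D := \sum_(k < L) _.
have D0 : 0 <= D by apply: sumr_ge0 => k _; rewrite mulr_ge0 ?fp_ge0 ?(w_ge0 hw).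
have Ha : tozero a := tozero_bdd hp hw (hbdd Aa).
have DM : D <= powR M p.
  apply: le_trans (sorted_bdd hp hw (hbdd Aa) Ha (uniq_sig (tozero_trunc i a) L)).
  apply: ler_sum => k _; apply: ler_wpM2r; [exact: w_ge0 | exact: fp_trunc_le].
set X := \sum_(k < size l) _.
have X0 : 0 <= X by apply: sumr_ge0 => k _; rewrite mulr_ge0 ?fp_ge0 ?(w_ge0 hw).
have h1 := normpw_ge hp hw a ul.
have h2 : ((powR X p^-1)%:E <= (powR D p^-1 + d)%:E)%E.
  by rewrite EFinD; apply: le_trans h1 (le_trans hi (leeD hn (le_refl _))).
rewrite lee_fin in h2.
have yM : powR D p^-1 <= M.
  by rewrite -[M](powRinvp hp hM0); apply: (lepinv hp).
apply: (@le_trans _ _ (powR (powR D p^-1 + d) p)).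
  by rewrite -[X in X <= _](powRpinv hp X0); apply: (lep hp) => //; exact: powR_ge0.
by have := conv_lip hp (powR_ge0 D p^-1) yM d0 d1; rewrite (powRpinv hp D0).
Qed.


Lemma tele_w r m : \sum_(i < m) (w (r + i)%N - w (r + i.+1)%N) = w r - w (r + m)%N.
Proof.
elim: m => [|m IH]; first by rewrite big_ord0 addn0 subrr.
by rewrite big_ord_recr /= IH addnS; lra.
Qed.


Lemma step1 eps (e0 : 0 < eps) (Heq : equinormed p w A) : exists i1, forall a, A a -> forall n,
  \sum_(k < n) fp p a (sigma a k) * w k <= \sum_(k < i1) fp p a (sigma a k) * w k + eps.
Proof.
set d := Num.min 1 (eps / Kc).
have d0 : 0 < d by rewrite lt_min ltr01 divr_gt0 // Kc_gt0.
have d1 : d <= 1 by rewrite ge_min lexx.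
have dK : d * Kc <= eps.
  by rewrite -ler_pdivlMr ?Kc_gt0 // ge_min lexx orbT.
have [i1 Hi1] := Heq d d0; exists i1 => a Aa n.
have Ha : tozero a := tozero_bdd hp hw (hbdd Aa).
have [L [Li hL dL hl]] := gap Aa (ltW d0) d1 (Hi1 a Aa).
have := hl _ (uniq_sig Ha n); rewrite size_map_iota.
have -> : \sum_(k < n) fp p a (nth 0%N (map (sigma a) (iota 0 n)) k) * w k =
          \sum_(k < n) fp p a (sigma a k) * w k.
  by apply: eq_bigr => k _; rewrite nth_map_iota.
move=> h; apply: (le_trans h); apply: lerD; last exact: dK.
apply: (@le_trans _ _ (\sum_(k < L) fp p a (sigma (trunc i1 a) k) * w k)).
  by apply: ler_sum => k _; apply: ler_wpM2r; [exact: w_ge0 | exact: fp_trunc_le].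
apply: le_trans (rearr_list hp hw Ha (uniq_sig (tozero_trunc i1 a) L)) _.
apply: (sum_nonneg_widen (u := fun k => fp p a (sigma a k) * w k)) => //.
by move=> k; rewrite mulr_ge0 ?fp_ge0 ?(w_ge0 hw).
Qed.


Lemma step2 eta (eta0 : 0 < eta) (Heq : equinormed p w A) : exists i2, forall a, A a ->
  forall j, (i2 <= j)%N -> fp p a j <= eta + eta.
Proof.
have [R0 hR0] := W_unbounded hw (powR M p / eta).
have wR0 := w_gt0 hw R0.
set d := Num.min 1 (eta * w R0 / Kc).
have d0 : 0 < d by rewrite lt_min ltr01 divr_gt0 ?Kc_gt0 // mulr_gt0.
have d1 : d <= 1 by rewrite ge_min lexx.
have dK : d * Kc <= eta * w R0.
  by rewrite -ler_pdivlMr ?Kc_gt0 // ge_min lexx orbT.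
have [i2 Hi2] := Heq d d0; exists i2 => a Aa j ij.
have Ha : tozero a := tozero_bdd hp hw (hbdd Aa).
have [L [Li hL dL hl]] := gap Aa (ltW d0) d1 (Hi2 a Aa).
have Hb : tozero (trunc i2 a) := tozero_trunc i2 a.
set b := trunc i2 a in hL dL hl Hb.
set t := sigma b in hL dL hl.
set e := fp p a j.
set r := minn R0 L.
have rL : (r <= L)%N by rewrite geq_minr.
have rR : (r <= R0)%N by rewrite geq_minl.
set l1 := map t (iota 0 r); set l2 := map t (iota r (L - r)).
have l12 : l1 ++ l2 = map t (iota 0 L).
  by rewrite /l1 /l2 -map_cat -{2}(add0n r) -iotaD subnKC.
have ul : uniq (l1 ++ j :: l2).
  rewrite -cat1s uniq_catCA cat1s /= l12 uniq_sig // andbT.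
  apply/mapP => [[k]]; rewrite mem_iota add0n /= => kL je.
  by have := hL k kL; rewrite -je; lia.
have := hl _ ul.
have -> : \sum_(k < size (l1 ++ j :: l2)) fp p a (nth 0%N (l1 ++ j :: l2) k) * w k =
  \sum_(k < r) fp p a (t k) * w k +
  (e * w r + \sum_(k < L - r) fp p a (t (r + k)%N) * w (r + k.+1)%N).
  rewrite size_cat /= !size_map !size_iota.
  rewrite (sum_split_nat (fun k => fp p a (nth 0%N (l1 ++ j :: l2) k) * w k)); congr (_ + _).
    by apply: eq_bigr => k _; rewrite nth_cat size_map size_iota ltn_ord nth_map_iota.
  rewrite big_ord_recl /= nth_cat size_map size_iota addn0 ltnn subnn /=; congr (_ + _).
  apply: eq_bigr => k _; rewrite nth_cat size_map size_iota /bump /=.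
  rewrite add1n ltnNge leq_addr /= addKn /= /l2 (nth_map 0%N) ?size_iota //.
  by rewrite nth_iota.
have -> : \sum_(k < L) fp p b (t k) * w k = \sum_(k < r) fp p b (t k) * w k +
    \sum_(k < L - r) fp p b (t (r + k)%N) * w (r + k)%N.
  exact: (sum_split_le (fun k => fp p b (t k) * w k) rL).
move=> h.
have hA1 : \sum_(k < r) fp p b (t k) * w k <= \sum_(k < r) fp p a (t k) * w k.
  by apply: ler_sum => k _; apply: ler_wpM2r; [exact: w_ge0 | exact: fp_trunc_le].
have hA2 : \sum_(k < L - r) fp p b (t (r + k)%N) * w (r + k.+1)%N <=
           \sum_(k < L - r) fp p a (t (r + k)%N) * w (r + k.+1)%N.
  by apply: ler_sum => k _; apply: ler_wpM2r; [exact: w_ge0 | exact: fp_trunc_le].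
have hB : \sum_(k < L - r) fp p b (t (r + k)%N) * w (r + k)%N -
          \sum_(k < L - r) fp p b (t (r + k)%N) * w (r + k.+1)%N <=
          fp p b (t r) * w r.
  rewrite -sumrB.
  apply: (@le_trans _ _ (\sum_(k < L - r) fp p b (t r) * (w (r + k)%N - w (r + k.+1)%N))).
    apply: ler_sum => k _; rewrite -mulrBr; apply: ler_wpM2r.
      by rewrite subr_ge0 addnS; exact: w_dec.
    by apply: (d_mono hp Hb); exact: leq_addr.
  rewrite -mulr_sumr tele_w; apply: ler_wpM2l; first exact: fp_ge0.
  by rewrite gerDl oppr_le0 w_ge0.
have dr : fp p b (t r) <= eta.
  case: (leqP R0 L) => RL.
    have rE : r = R0 by rewrite /r; apply/minn_idPl.
    rewrite rE.
    set W := \sum_(k < R0.+1) w k.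
    have hW : powR M p / eta < W.
      apply: lt_le_trans hR0 _; apply: (sum_nonneg_widen (u := w)) => //.
      exact: w_ge0.
    have hfW : fp p b (t R0) * W <= powR M p.
      apply: le_trans (sorted_bdd hp hw (hbdd Aa) Ha (uniq_sig Hb R0.+1)).
      rewrite mulr_sumr; apply: ler_sum => k _.
      apply: (@le_trans _ _ (fp p b (t k) * w k)); last first.
        by apply: ler_wpM2r; [exact: w_ge0 | exact: fp_trunc_le].
      apply: ler_wpM2r; first exact: w_ge0.
      by apply: (d_mono hp Hb); rewrite -ltnS.
    have Mp0 : 0 <= powR M p := powR_ge0 _ _.
    have Xe : powR M p / eta * eta = powR M p by field; rewrite gt_eqF.
    have f0 : 0 <= fp p b (t R0) := fp_ge0 _ _ _.
    rewrite leNgt; apply/negP => hc.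
    have W0 : 0 < W by apply: le_lt_trans hW; rewrite divr_ge0 // ltW.
    have h3 : powR M p / eta * eta < W * eta by rewrite ltr_pM2r.
    rewrite Xe in h3.
    have h4 : eta * W < fp p b (t R0) * W by rewrite ltr_pM2r.
    lra.
  have rE : r = L by rewrite /r; apply/minn_idPr/ltnW.
  by rewrite rE dL // ltW.
have wr := w_gt0 hw r.
have wRr : w R0 <= w r := w_mono hw rR.
rewrite -(ler_pM2r wr).
have : e * w r <= fp p b (t r) * w r + d * Kc by lra.
have : fp p b (t r) * w r <= eta * w r by apply: ler_wpM2r => //; exact: ltW.
have : eta * w R0 <= eta * w r by apply: ler_wpM2l => //; exact: ltW.
lra.
Qed.

End S7.

Lemma series_from_le {R : realType} (u : nat -> R) i B : (forall k, 0 <= u k) ->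
  (forall J, \sum_(i <= k < J) u k <= B) -> (\sum_(i <= k <oo) (u k)%:E <= B%:E)%E.
Proof.
move=> u0 uB; apply: lime_le.
  by apply: is_cvg_nneseries => k _ _; rewrite lee_fin.
by apply: nearW => J; rewrite /= sumEFin lee_fin.
Qed.

Lemma winv_ge0 {R : realType} (w a : nat -> R) j : weight_seq w -> 0 <= winv w a j.
Proof. by move=> hw; rewrite /winv; case: pselect => _ //; exact: w_ge0. Qed.

Section S8.
Variable R : realType.
Variables (p : R) (w : nat -> R).
Hypothesis hp : 1 <= p.
Hypothesis hw : weight_seq w.
Variables (A : set (nat -> R)) (M : R).
Hypothesis hM0 : 0 <= M.
Hypothesis hbdd : forall a, A a -> (normpw p w a <= M%:E)%E.

Lemma dir1 (Heq : equinormed p w A) eps (e0 : 0 < eps) : exists N, forall a, A a ->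
  forall i, (N <= i)%N ->
  (\sum_(i <= j <oo) (powR `|a j| p * winv w a j)%:E < eps%:E)%E.
Proof.
have e3 : 0 < eps / 3 by rewrite divr_gt0.
have [i1 H1] := step1 hp hw hM0 hbdd e3 Heq.
have i10 : 0 < (i1.+1)%:R :> R by rewrite ltr0n.
set eta := eps / (6 * (i1.+1)%:R).
have eta0 : 0 < eta by rewrite divr_gt0 // mulr_gt0.
have [i2 H2] := step2 hp hw hM0 hbdd eta0 Heq.
exists (maxn i1 i2) => a Aa i Ni.
have Ha : tozero a := tozero_bdd hp hw (hbdd Aa).
have i2i : (i2 <= i)%N by apply: leq_trans Ni; rewrite leq_maxr.
have etai1 : (eta + eta) * i1%:R <= eps / 3.
  rewrite /eta; have : (i1%:R : R) <= (i1.+1)%:R by rewrite ler_nat.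
  move=> hi.
  have he : eta * (6 * (i1.+1)%:R) = eps by rewrite /eta divfK // gt_eqF // mulr_gt0.
  apply: (@le_trans _ _ ((eta + eta) * (i1.+1)%:R)).
    by apply: ler_wpM2l => //; rewrite addr_ge0 // ltW.
  suff -> : eps / 3 = (eta + eta) * (i1.+1)%:R by [].
  by rewrite -he; field.
apply: (@le_lt_trans _ _ ((eps / 3 + eps / 3)%:E)); last by rewrite lte_fin; lra.
apply: series_from_le => [k|J].
  by rewrite mulr_ge0 ?powR_ge0 ?winv_ge0.
rewrite sum_nat_from.
have [n0 Hn0] := cover Ha J.
set n := maxn n0 i1.
have Hn : forall h, (sigma a h < J)%N -> (h < n)%N.
  by move=> h /Hn0 h0; apply: leq_trans h0 _; rewrite leq_maxl.
have i1n : (i1 <= n)%N by rewrite leq_maxr.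
set c := fun h => fp p a (sigma a h).
have c0 : forall h, 0 <= c h by move=> h; exact: fp_ge0.
have -> : \sum_(j < J) (if (i <= j)%N then powR `|a j| p * winv w a j else 0) =
          \sum_(j < J) (if (i <= j)%N then fp p a j else 0) * winv w a j.
  by apply: eq_bigr => j _; case: ifP; rewrite ?mul0r.
rewrite (sum_winv w Ha (fun j => if (i <= j)%N then fp p a j else 0) Hn).
set X := fun h : nat => (if (i <= sigma a h)%N then c h else 0) * w h.
have X0 : forall h, 0 <= X h.
  by move=> h; rewrite /X mulr_ge0 ?(w_ge0 hw) //; case: ifP.
apply: (@le_trans _ _ (\sum_(h < n) X h)).
  rewrite [leRHS](bigID (fun h : 'I_n => (sigma a h < J)%N)) /= lerDl.
  by apply: sumr_ge0 => h _.
have -> : \sum_(h < n) X h = \sum_(h < n) (if (h < i1)%N then X h else 0) +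
                            \sum_(h < n) (if (h < i1)%N then 0 else X h).
  by rewrite -big_split /=; apply: eq_bigr => h _; case: ifP; rewrite ?addr0 ?add0r.
apply: lerD.
  apply: (@le_trans _ _ (\sum_(h < n) (if (h < i1)%N then eta + eta else 0))).
    apply: ler_sum => h _; case: ifP => // _.
    rewrite /X; case: ifP => ih; last by rewrite mul0r; lra.
    have ch : c h <= eta + eta by apply: H2 => //; apply: leq_trans i2i ih.
    apply: le_trans ch; rewrite ler_piMr //; exact: (w_le1 hw).
  apply: le_trans etai1.
  apply: le_trans (sum_zero_tail (u := fun h => if (h < i1)%N then eta + eta else 0) (L := i1) n _ _) _.
  - by move=> k; rewrite ltnNge => ->.
  - by move=> k; case: ifP => //; lra.
  rewrite (eq_bigr (fun _ => eta + eta)); last by move=> k _; rewrite ltn_ord.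
  by rewrite sumr_const card_ord mulr_natr.
apply: (@le_trans _ _ (\sum_(h < n) (if (h < i1)%N then 0 else c h * w h))).
  apply: ler_sum => h _; case: ifP => // _; rewrite /X; case: ifP => _ //.
  by rewrite mul0r mulr_ge0 ?(w_ge0 hw).
have := H1 a Aa n.
have -> : \sum_(k < n) fp p a (sigma a k) * w k =
   \sum_(h < n) (if (h < i1)%N then c h * w h else 0) +
   \sum_(h < n) (if (h < i1)%N then 0 else c h * w h).
  by rewrite -big_split /=; apply: eq_bigr => h _; case: ifP; rewrite ?addr0 ?add0r.
have -> : \sum_(h < n) (if (h < i1)%N then c h * w h else 0) =
          \sum_(k < i1) fp p a (sigma a k) * w k.
  by rewrite (big_ord_widen n (fun k => fp p a (sigma a k) * w k) i1n) [RHS]big_mkcond.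
lra.
Qed.


Lemma dir2 (Ht : forall eps, 0 < eps -> exists N, forall a, A a -> forall i, (N <= i)%N ->
  (\sum_(i <= j <oo) (powR `|a j| p * winv w a j)%:E < eps%:E)%E) : equinormed p w A.
Proof.
move=> eps e0.
have ep0 : 0 < powR eps p := powR_gt0 _ e0.
have [N HN] := Ht _ ep0; exists N => a Aa.
have Ha : tozero a := tozero_bdd hp hw (hbdd Aa).
set T := (\sum_(N <= j <oo) (powR `|a j| p * winv w a j)%:E)%E.
have hT : (T < (powR eps p)%:E)%E := HN a Aa N (leqnn N).
have T0 : (0 <= T)%E.
  by apply: nneseries_ge0 => k _ _; rewrite lee_fin mulr_ge0 ?powR_ge0 ?winv_ge0.
have Tfin : T = (fine T)%:E.
  by rewrite fineK // ge0_fin_numE // (lt_trans hT) ?ltry.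
set Tr := fine T.
have Tr0 : 0 <= Tr by rewrite -lee_fin -Tfin.
have TrE : Tr < powR eps p by rewrite -lte_fin -Tfin.
set F := fun j => fp p a j * winv w a j.
have F0 : forall j, 0 <= F j by move=> j; rewrite /F mulr_ge0 ?fp_ge0 ?winv_ge0.
set S := \sum_(j < N) F j.
have S0 : 0 <= S by apply: sumr_ge0 => j _.
have C1 : (normpw p w a <= (powR (S + Tr) p^-1)%:E)%E.
  apply: (normpw_le hp hw (addr_ge0 S0 Tr0)) => s bs n.
  apply: le_trans (rearr_bij hp hw Ha bs n) _.
  set J := (\sum_(k < n) sigma a k).+1.
  have hJ : forall k, (k < n)%N -> (sigma a k < J)%N.
    move=> k kn; rewrite ltnS (bigD1 (Ordinal kn)) //=; exact: leq_addr.
  have [n0 Hn0] := cover Ha J.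
  set n' := maxn n0 n.
  have Hn' : forall h, (sigma a h < J)%N -> (h < n')%N.
    by move=> h /Hn0 h0; apply: leq_trans h0 _; rewrite leq_maxl.
  have nn' : (n <= n')%N by rewrite leq_maxr.
  apply: (@le_trans _ _ (\sum_(j < J) F j)).
    rewrite /F (sum_winv w Ha (fp p a) Hn').
    rewrite (big_ord_widen n' (fun k => fp p a (sigma a k) * w k) nn').
    rewrite big_mkcond [leRHS]big_mkcond /=; apply: ler_sum => h _.
    case: ifP => hn; first by rewrite hJ.
    by case: ifP => // _; rewrite mulr_ge0 ?fp_ge0 ?(w_ge0 hw).
  have -> : \sum_(j < J) F j = \sum_(j < J) (if (j < N)%N then F j else 0) +
                              \sum_(j < J) (if (N <= j)%N then F j else 0).
    rewrite -big_split /=; apply: eq_bigr => j _.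
    by case: (ltnP j N) => _; rewrite ?addr0 ?add0r.
  apply: lerD.
    apply: le_trans (sum_zero_tail (u := fun j => if (j < N)%N then F j else 0) (L := N) J _ _) _.
    - by move=> k; rewrite ltnNge => ->.
    - by move=> k; case: ifP.
    suff -> : \sum_(k < N) (if (k < N)%N then F k else 0) = S by [].
    by apply: eq_bigr => k _; rewrite ltn_ord.
  rewrite -sum_nat_from -lee_fin -Tfin -sumEFin.
  by apply: nneseries_lim_ge => k _ _; rewrite lee_fin.
have C2 : ((powR S p^-1)%:E <= normpw p w (trunc N a))%E.
  have [n Hn] := cover Ha N.
  have := normpw_ge hp hw (trunc N a) (uniq_sig Ha n); rewrite size_map_iota.
  suff -> : \sum_(k < n) fp p (trunc N a) (nth 0%N (map (sigma a) (iota 0 n)) k) * w k = S by [].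
  rewrite /S /F (sum_winv w Ha (fp p a) Hn) [RHS]big_mkcond /=; apply: eq_bigr => h _.
  by rewrite nth_map_iota // (fp_trunc hp); case: ifP; rewrite ?mul0r.
rewrite /normpwi; apply: le_trans C1 _.
apply: (@le_trans _ _ ((powR S p^-1 + powR Tr p^-1)%:E)).
  by rewrite lee_fin; apply: sub_pinv.
rewrite EFinD; apply: leeD => //; rewrite lee_fin.
rewrite -[leRHS](powRinvp hp (ltW e0)); apply: (lepinv hp) => //; exact: ltW.
Qed.

End S8.


Unset Implicit Arguments. Set Strict Implicit.

Theorem mainTheorem14 (R : realType) (p : R) (w : nat -> R) (A : set (nat -> R))
  (hp : 1 <= p) (hw : weight_seq w)
  (hA : forall a, A a -> Lpw p w a)
  (hbdd : exists M : R, forall a, A a -> (normpw p w a <= M%:E)%E) :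
  equinormed p w A <->
  (forall eps : R, 0 < eps -> exists N : nat, forall a, A a -> forall i, (N <= i)%N ->
     (\sum_(i <= j <oo) (powR `|a j| p * winv w a j)%:E < eps%:E)%E).
Proof.
have [M hM] := hbdd.
set M' := Num.max M 0.
have hM0 : 0 <= M' by rewrite le_max lexx orbT.
have hb : forall a, A a -> (normpw p w a <= M'%:E)%E.
  by move=> a Aa; apply: le_trans (hM a Aa) _; rewrite lee_fin le_max lexx.
split => [Heq|Ht]; first exact: (dir1 hp hw hM0 hb Heq).
exact: (dir2 hp hw hb Ht).
Qed.
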